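(* Let $X$ be a non-empty set, $\overline X=X\cup X'$ and $\widetilde X=\overline X\cup\{(x\wedge y):x,y\in\overline X\}$. The relation $\widetilde\Theta(\mathcal{CS},X)=\{(u,v)\in\widetilde X^+\times\widetilde X^+:\overline u=\overline v\}$ on the free semigroup $\widetilde X^+$ equals the semigroup congruence on $\widetilde X^+$ generated by $\mathrm I\cup\Upsilon_3\cup\Upsilon_4\cup\Upsilon_5$, where $\mathrm I=\{(xx'x,x):x\in\overline X\}$, $\Upsilon_3=\{((x\wedge y)(x\wedge z),(x\wedge z)):x,y,z\in\overline X\}$, $\Upsilon_4=\{((z\wedge x)(y\wedge x),(z\wedge x)):x,y,z\in\overline X\}$, $\Upsilon_5=\{(x'x,(x'\wedge x)):x\in\overline X\}$.
   Context: $X'=\{x':x\in X\}$ is a set disjoint from $X$ in bijection with $X$ via $x\mapsto x'$; extend $'$ to $\overline X$ by $(x')'=x$. The free binary semigroup $F_2(\overline X)$ is the smallest set of nonempty words over $\overline X\cup\{(,\wedge,)\}$ containing $\overline X$ and closed under concatenation and under $(u,v)\mapsto(u\wedge v)$. The symbols $(x\wedge y)$, $x,y\in\overline X$, are treated as single letters of the alphabet $\widetilde X$, and $\widetilde X^+\subseteq F_2(\overline X)$. For a term $w$, $\iota w$ [$w\tau$] is the first [last] element of $\overline X$ in $w$. Reductions ($u,v$ terms, $x,y,z\in\overline X$): (R0) $(u\wedge v)\rightsquigarrow(\iota u\wedge v\tau)$; (R1) $x(y\wedge x)\rightsquigarrow x$; (R2) $(x\wedge y)x\rightsquigarrow x$;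 (R3) $(x\wedge y)(x\wedge z)\rightsquigarrow(x\wedge z)$; (R4) $(z\wedge x)(y\wedge x)\rightsquigarrow(z\wedge x)$; (R5) $x'x\rightsquigarrow(x'\wedge x)$, applied to segments. It is known (Auinger) that every term has a unique reduced form $\overline w$ (no reduction applicable) obtainable by finitely many reductions; moreover $\widetilde\Theta(\mathcal{CS},X)$ is a congruence on $\widetilde X^+$ whose quotient is the bifree completely simple semigroup on $X$, and a pair $(u,v)$ lies in it iff the bi-identity $u\,\hat=\,v$ holds in all completely simple semigroups. *)

(* Defs.v *)
From Stdlib Require Import List Relations.
Import ListNotations.
Set Implicit Arguments.

Section BifreeCS.
Variable X : Type.

(* \overline X = X ∪ X' ; Pos x = x, Neg x = x' *)
Inductive Xb : Type := Pos (x : X) | Neg (x : X).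
Definition prime (a : Xb) : Xb :=
  match a with Pos x => Neg x | Neg x => Pos x end.

(* Terms of F_2(\overline X): words (lists) of blocks; a block is a letter
   of \overline X or a wedge (u ∧ v) of two words. Only nonempty words arise. *)
Inductive blk : Type :=
| Let (a : Xb)
| Wdg (u v : list blk).

Fixpoint iota_b (b : blk) : option Xb :=
  match b with
  | Let a => Some a
  | Wdg u _ => match u with [] => None | b' :: _ => iota_b b' end
  end.
Fixpoint tau_b (b : blk) : option Xb :=
  match b with
  | Let a => Some a
  | Wdg _ v =>
      (fix lastb (l : list blk) : option Xb :=
         match l with
         | [] => None
         | [b'] => tau_b b'
         | _ :: l' => lastb l'
         end) v
  end.
Definition iota_w (w : list blk) : option Xb :=
  match w with [] => None | b :: _ => iota_b b end.
Definition tau_w (w : list blk) : option Xb :=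
  match rev w with [] => None | b :: _ => tau_b b end.

Definition wl (a b : Xb) : blk := Wdg [Let a] [Let b].

Inductive rule : list blk -> list blk -> Prop :=
| R1 x y : rule [Let x; wl y x] [Let x]
| R2 x y : rule [wl x y; Let x] [Let x]
| R3 x y z : rule [wl x y; wl x z] [wl x z]
| R4 x y z : rule [wl z x; wl y x] [wl z x]
| R5 x : rule [Let (prime x); Let x] [wl (prime x) x].

(* one reduction step, applied to a segment (possibly inside wedges);
   (R0) only counts as applicable when it changes the term *)
Inductive step : list blk -> list blk -> Prop :=
| st_rule p l r s : rule l r -> step (p ++ l ++ s) (p ++ r ++ s)
| st_R0 p u v a b s :
    iota_w u = Some a -> tau_w v = Some b -> (u, v) <> ([Let a], [Let b]) ->
    step (p ++ Wdg u v :: s) (p ++ wl a b :: s)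
| st_inL p u u' v s : step u u' -> step (p ++ Wdg u v :: s) (p ++ Wdg u' v :: s)
| st_inR p u v v' s : step v v' -> step (p ++ Wdg u v :: s) (p ++ Wdg u v' :: s).

Definition reduces : list blk -> list blk -> Prop := clos_refl_trans _ step.
Definition reduced (w : list blk) : Prop := forall w', ~ step w w'.
(* w is a reduced form of u (unique by Auinger) *)
Definition reduced_form (u w : list blk) : Prop := reduces u w /\ reduced w.

Inductive tletter : Type := TL (a : Xb) | TW (a b : Xb).
Definition emb_l (t : tletter) : blk :=
  match t with TL a => Let a | TW a b => wl a b end.
Definition emb (u : list tletter) : list blk := map emb_l u.

(* \widetilde Θ(CS,X) on \widetilde X^+ : same reduced form *)
Definition Theta (u v : list tletter) : Prop :=
  u <> [] /\ v <> [] /\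
  exists w, reduced_form (emb u) w /\ reduced_form (emb v) w.

Inductive gens : list tletter -> list tletter -> Prop :=
| G_I x : gens [TL x; TL (prime x); TL x] [TL x]
| G_U3 x y z : gens [TW x y; TW x z] [TW x z]
| G_U4 x y z : gens [TW z x; TW y x] [TW z x]
| G_U5 x : gens [TL (prime x); TL x] [TW (prime x) x].

Inductive cong : list tletter -> list tletter -> Prop :=
| c_gen p l r s : gens l r -> cong (p ++ l ++ s) (p ++ r ++ s)
| c_refl u : cong u u
| c_sym u v : cong u v -> cong v u
| c_trans u v w : cong u v -> cong v w -> cong u w.
End BifreeCS.

(* Main.v *)
Require Import Defs.
From Stdlib Require Import List Relations Classical Lia.
Import ListNotations.
Set Implicit Arguments.

Section Proof.
Variable X : Type.
Notation T := (tletter X).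

Lemma prime_prime (a : Xb X) : prime (prime a) = a.
Proof. destruct a; reflexivity. Qed.

Inductive trule : T -> T -> T -> Prop :=
| T1 a b : trule (TL a) (TW b a) (TL a)
| T2 a b : trule (TW a b) (TL a) (TL a)
| T3 a b c : trule (TW a b) (TW a c) (TW a c)
| T4 a b c : trule (TW c a) (TW b a) (TW c a)
| T5 a : trule (TL (prime a)) (TL a) (TW (prime a) a).

Lemma T5' a : trule (TL a) (TL (prime a)) (TW a (prime a)).
Proof. pose proof (T5 (prime a)) as H. rewrite prime_prime in H. exact H. Qed.

Inductive tstep : list T -> list T -> Prop :=
| ts_head x y z s : trule x y z -> tstep (x::y::s) (z::s)
| ts_cons a u v : tstep u v -> tstep (a::u) (a::v).

Definition tsteps := clos_refl_trans _ tstep.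
Definition tirred (n : list T) := forall v, ~ tstep n v.

Hint Constructors trule tstep clos_refl_trans : rw.
Hint Resolve T5' : rw.

Lemma tstep_len u v : tstep u v -> S (length v) = length u.
Proof. induction 1; simpl; lia. Qed.

Lemma tsteps_len u v : tsteps u v -> length v <= length u.
Proof. induction 1; try apply tstep_len in H; lia. Qed.

Lemma tstep_app_r u v s : tstep u v -> tstep (u ++ s) (v ++ s).
Proof. induction 1; simpl; eauto with rw. Qed.

Lemma tstep_app_l p u v : tstep u v -> tstep (p ++ u) (p ++ v).
Proof. induction p; simpl; eauto with rw. Qed.

Lemma tsteps_ctx p s u v : tsteps u v -> tsteps (p ++ u ++ s) (p ++ v ++ s).
Proof.
  induction 1.
  - apply rt_step, tstep_app_l, tstep_app_r; auto.
  - apply rt_refl.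
  - eapply rt_trans; eauto.
Qed.

Lemma tsteps_cons a u v : tsteps u v -> tsteps (a::u) (a::v).
Proof. induction 1; [apply rt_step; auto with rw | apply rt_refl | eapply rt_trans; eauto]. Qed.

Lemma trule_det x y z1 z2 : trule x y z1 -> trule x y z2 -> z1 = z2.
Proof. intros H1 H2; inversion H1; inversion H2; subst; congruence. Qed.

Ltac rr := first [ apply rt_refl | apply rt_step; apply ts_head; eauto with rw
  | eapply rt_trans; [apply rt_step; apply ts_head; eauto with rw | rr ] ].

Ltac join := match goal with |- exists t, tsteps ?L t /\ tsteps ?R t =>
  first [ exists L; split; [apply rt_refl | rr ]
        | exists R; split; [rr | apply rt_refl ]
        | eexists; split; [apply rt_step; apply ts_head; eauto with rw | rr ] ] end.

Lemma crit x y w z1 z2 : trule x y z1 -> trule y w z2 ->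
  exists t, tsteps [z1; w] t /\ tsteps [x; z2] t.
Proof.
  intros H1 H2; inversion H1; subst; inversion H2; subst;
  repeat rewrite prime_prime in *; join.
Qed.

Lemma tsteps_app_r u v s : tsteps u v -> tsteps (u ++ s) (v ++ s).
Proof. intro H. pose proof (tsteps_ctx [] s H) as H'. exact H'. Qed.

Lemma local_conf u v1 v2 : tstep u v1 -> tstep u v2 ->
  exists w, tsteps v1 w /\ tsteps v2 w.
Proof.
  intro H; revert v2; induction H as [x y z s Hr | a u v H IH]; intros v2 H2.
  - inversion H2 as [x' y' z' s' Hr' | a' u' v' H3]; subst.
    + pose proof (trule_det Hr Hr'); subst. exists (z'::s); split; apply rt_refl.
    + inversion H3 as [x2 y2 z2 s2 Hr2 | a2 u2 v2 H4]; subst.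
      * destruct (crit Hr Hr2) as [t [A B]].
        exists (t ++ s2); split.
        -- apply (tsteps_app_r s2 A).
        -- apply (tsteps_app_r s2 B).
      * exists (z :: v2); split.
        -- apply tsteps_cons, rt_step; auto.
        -- apply rt_step; constructor; auto.
  - inversion H2 as [x' y' z' s' Hr' | a' u' v' H3]; subst.
    + inversion H as [x2 y2 z2 s2 Hr2 | a2 u2 v2 H4]; subst.
      * destruct (crit Hr' Hr2) as [t [A B]].
        exists (t ++ s2); split.
        -- apply (tsteps_app_r s2 B).
        -- apply (tsteps_app_r s2 A).
      * exists (z' :: v2); split.
        -- apply rt_step; constructor; auto.
        -- apply tsteps_cons, rt_step; auto.
    + destruct (IH _ H3) as [w [A B]]. exists (a::w); split; apply tsteps_cons; auto.
Qed.

Lemma nf_exists_n N : forall u, length u <= N -> exists n, tsteps u n /\ tirred n.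
Proof.
  induction N; intros u Hu.
  - exists u; split; [apply rt_refl|]. intros v Hv. apply tstep_len in Hv. lia.
  - destruct (classic (exists v, tstep u v)) as [[v Hv]|Hn].
    + pose proof (tstep_len Hv). destruct (IHN v) as [n [A B]]; [lia|].
      exists n; split; auto. eapply rt_trans; [apply rt_step|]; eauto.
    + exists u; split; [apply rt_refl|]. intros v Hv; apply Hn; eauto.
Qed.

Lemma nf_exists u : exists n, tsteps u n /\ tirred n.
Proof. eapply nf_exists_n; eauto. Qed.

Lemma nf_unique_n N : forall u, length u <= N -> forall n1 n2,
  tsteps u n1 -> tirred n1 -> tsteps u n2 -> tirred n2 -> n1 = n2.
Proof.
  induction N; intros u Hu n1 n2 H1 I1 H2 I2.
  - apply clos_rt_rt1n in H1. destruct H1 as [|u1 n1x S1 _].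
    + apply clos_rt_rt1n in H2. destruct H2 as [|u2 n2x S2 _]; auto.
      exfalso; eapply I1; eauto.
    + apply tstep_len in S1; lia.
  - apply clos_rt_rt1n in H1. destruct H1 as [|u1 n1x S1 R1].
    + apply clos_rt_rt1n in H2. destruct H2 as [|u2 n2x S2 _]; auto.
      exfalso; eapply I1; eauto.
    + apply clos_rt_rt1n in H2. destruct H2 as [|u2 n2x S2 R2].
      * exfalso; eapply I2; eauto.
      * apply clos_rt1n_rt in R1. apply clos_rt1n_rt in R2.
        destruct (local_conf S1 S2) as [w [A B]].
        destruct (nf_exists w) as [n [C D]].
        pose proof (tstep_len S1). pose proof (tstep_len S2).
        transitivity n.
        -- apply (IHN u1); [lia| | | |]; auto. eapply rt_trans; eauto.
        -- symmetry; apply (IHN u2); [lia| | | |]; auto. eapply rt_trans; eauto.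
Qed.

Lemma nf_unique u n1 n2 :
  tsteps u n1 -> tirred n1 -> tsteps u n2 -> tirred n2 -> n1 = n2.
Proof. eapply nf_unique_n; eauto. Qed.

Lemma emb_l_Let (t : T) (a : Xb X) : emb_l t = Let a -> t = TL a.
Proof. destruct t; simpl; intro H; inversion H; auto. Qed.

Lemma emb_l_Wdg (t : T) (u v : list (blk X)) : emb_l t = Wdg u v -> exists a b, t = TW a b /\ u = [Let a] /\ v = [Let b].
Proof. destruct t; simpl; intro H; inversion H; eauto. Qed.

Lemma emb_l_inj (t1 t2 : T) : emb_l t1 = emb_l t2 -> t1 = t2.
Proof. destruct t1, t2; simpl; intro H; inversion H; auto. Qed.

Lemma emb_inj (u v : list T) : emb u = emb v -> u = v.
Proof.
  revert v; induction u; destruct v; simpl; intro H; inversion H; auto.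
  f_equal; auto using emb_l_inj.
Qed.

Lemma no_step_let (a : Xb X) w : ~ step [Let a] w.
Proof.
  intro H; inversion H; subst.
  - match goal with H : rule _ _ |- _ => destruct H end;
    match goal with H : _ = [Let a] |- _ =>
      destruct p as [|? [|]]; simpl in H; inversion H end.
  - match goal with H : _ = [Let a] |- _ =>
      destruct p as [|? [|]]; simpl in H; inversion H end.
  - match goal with H : _ = [Let a] |- _ =>
      destruct p as [|? [|]]; simpl in H; inversion H end.
  - match goal with H : _ = [Let a] |- _ =>
      destruct p as [|? [|]]; simpl in H; inversion H end.
Qed.

Lemma tstep_app p x y z s : trule x y z -> tstep (p ++ x :: y :: s) (p ++ z :: s).
Proof. intro H; apply tstep_app_l; constructor; auto. Qed.

Lemma split_wdg (u : list T) p u0 v0 s :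
  p ++ Wdg u0 v0 :: s = emb u ->
  exists u1 a b u3, u = u1 ++ TW a b :: u3 /\ p = emb u1 /\ s = emb u3 /\
     u0 = [Let a] /\ v0 = [Let b].
Proof.
  intro H; symmetry in H; apply map_eq_app in H as [u1 [u2 [E1 [E2 E3]]]].
  apply map_eq_cons in E3 as [t [u3 [F1 [F2 F3]]]].
  apply emb_l_Wdg in F2 as [a [b [G1 [G2 G3]]]]. subst.
  exists u1, a, b, u3; repeat split; auto.
Qed.

Lemma stepA W w : step W w -> forall u, W = emb u -> exists u', w = emb u' /\ tstep u u'.
Proof.
  intros H u E. destruct H as [p l r s Hr | p u0 v0 a b s Ha Hb Hne | p u0 u0' v0 s Hs | p u0 v0 v0' s Hs].
  - symmetry in E; apply map_eq_app in E as [u1 [u2 [E1 [E2 E3]]]].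
    apply map_eq_app in E3 as [u3 [u4 [F1 [F2 F3]]]]. subst u u2 p s.
    destruct Hr;
    (destruct u3 as [|t1 [|t2 [|]]]; simpl in F2; inversion F2); unfold wl in *;
    repeat match goal with H : emb_l _ = Let _ |- _ => apply emb_l_Let in H
           | H : emb_l _ = Wdg _ _ |- _ =>
             let a := fresh in let b := fresh in let G := fresh in let G1 := fresh in let G2 := fresh in
             apply emb_l_Wdg in H as [a [b [G [G1 G2]]]]; inversion G1; inversion G2 end;
    subst.
    all: eexists; split; [| simpl; apply tstep_app; constructor ];
      unfold emb; rewrite map_app; reflexivity.
  - apply split_wdg in E as [u1 [a' [b' [u3 [E1 [E2 [E3 [E4 E5]]]]]]]]; subst.
    simpl in Ha, Hb. inversion Ha; inversion Hb; subst. exfalso; apply Hne; reflexivity.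
  - apply split_wdg in E as [u1 [a' [b' [u3 [E1 [E2 [E3 [E4 E5]]]]]]]]; subst.
    exfalso; eapply no_step_let; eauto.
  - apply split_wdg in E as [u1 [a' [b' [u3 [E1 [E2 [E3 [E4 E5]]]]]]]]; subst.
    exfalso; eapply no_step_let; eauto.
Qed.

Lemma step_cons (b : blk X) (w wp : list (blk X)) : step w wp -> step (b::w) (b::wp).
Proof.
  destruct 1.
  - apply (st_rule (b::p)); auto.
  - apply (st_R0 (b::p)); auto.
  - apply (st_inL (b::p)); auto.
  - apply (st_inR (b::p)); auto.
Qed.

Lemma stepB u u' : tstep u u' -> step (emb u) (emb u').
Proof.
  induction 1.
  - apply (@st_rule X [] [emb_l x; emb_l y] [emb_l z] (emb s)).
    destruct H; simpl; constructor.
  - simpl; apply step_cons; auto.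
Qed.

Lemma reducesA u w : reduces (emb u) w -> exists u', w = emb u' /\ tsteps u u'.
Proof.
  intro H; apply clos_rt_rt1n in H. remember (emb u) as W. revert u HeqW.
  induction H; intros u E.
  - exists u; split; auto; apply rt_refl.
  - subst. destruct (stepA H _ eq_refl) as [u1 [E1 S1]].
    destruct (IHclos_refl_trans_1n u1 E1) as [u2 [E2 S2]].
    exists u2; split; auto. eapply rt_trans; [apply rt_step|]; eauto.
Qed.

Lemma reducesB u u' : tsteps u u' -> reduces (emb u) (emb u').
Proof.
  induction 1.
  - apply rt_step, stepB; auto.
  - apply rt_refl.
  - eapply rt_trans; eauto.
Qed.

Lemma reducedB n : tirred n -> reduced (emb n).
Proof. intros H w Hs. destruct (stepA Hs _ eq_refl) as [u' [_ S]]. eapply H; eauto. Qed.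

Lemma cong_ctx p s (u v : list T) : cong u v -> cong (p ++ u ++ s) (p ++ v ++ s).
Proof.
  induction 1 as [p0 l r s0 G| u | u v _ IH | u v w _ IH1 _ IH2].
  - replace (p ++ (p0 ++ l ++ s0) ++ s) with ((p ++ p0) ++ l ++ (s0 ++ s))
      by (now rewrite !app_assoc).
    replace (p ++ (p0 ++ r ++ s0) ++ s) with ((p ++ p0) ++ r ++ (s0 ++ s))
      by (now rewrite !app_assoc).
    apply c_gen; auto.
  - apply c_refl.
  - apply c_sym; auto.
  - eapply c_trans; eauto.
Qed.

Lemma G_U5' (a : Xb X) : gens [TL a; TL (prime a)] [TW a (prime a)].
Proof. pose proof (G_U5 (prime a)) as H. rewrite prime_prime in H. exact H. Qed.

Ltac fw p s H := eapply c_trans; [exact (c_gen p s H) | simpl].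
Ltac bw p s H := eapply c_trans; [exact (c_sym (c_gen p s H)) | simpl].

Lemma trule_cong x y z : trule x y z -> cong [x; y] [z].
Proof.
  destruct 1.
  - bw (@nil T) [TW b a] (G_I a).
    fw [TL a] [TW b a] (G_U5 a).
    fw [TL a] (@nil T) (G_U4 a b (prime a)).
    bw [TL a] (@nil T) (G_U5 a).
    fw (@nil T) (@nil T) (G_I a).
    apply c_refl.
  - bw [TW a b] (@nil T) (G_I a).
    fw [TW a b] [TL a] (G_U5' a).
    fw (@nil T) [TL a] (G_U3 a b (prime a)).
    bw (@nil T) [TL a] (G_U5' a).
    fw (@nil T) (@nil T) (G_I a).
    apply c_refl.
  - exact (c_gen [] [] (G_U3 a b c)).
  - exact (c_gen [] [] (G_U4 a b c)).
  - exact (c_gen [] [] (G_U5 a)).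
Qed.

Lemma tstep_cong u v : tstep u v -> cong u v.
Proof.
  induction 1.
  - exact (cong_ctx [] s (trule_cong H)).
  - pose proof (cong_ctx [a] [] IHtstep) as E; simpl in E; rewrite !app_nil_r in E; exact E.
Qed.

Lemma tsteps_cong u v : tsteps u v -> cong u v.
Proof.
  induction 1; [apply tstep_cong; auto | apply c_refl | eapply c_trans; eauto].
Qed.

Lemma gens_tsteps (l r : list T) : gens l r -> tsteps l r.
Proof.
  destruct 1.
  - eapply rt_trans; [apply rt_step; apply ts_cons; apply ts_head; apply T5|].
    apply rt_step; apply ts_head; apply T1.
  - apply rt_step; apply ts_head; apply T3.
  - apply rt_step; apply ts_head; apply T4.
  - apply rt_step; apply ts_head; apply T5.
Qed.

Lemma cong_nf (u v : list T) : cong u v -> exists n, tsteps u n /\ tsteps v n /\ tirred n.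
Proof.
  induction 1 as [p l r s G| u | u v _ IH | u v w _ IH1 _ IH2].
  - destruct (nf_exists (p ++ r ++ s)) as [n [A B]].
    exists n; repeat split; auto.
    eapply rt_trans; [apply tsteps_ctx, gens_tsteps; eauto | auto].
  - destruct (nf_exists u) as [n [A B]]; eauto.
  - destruct IH as [n [A [B C]]]; eauto.
  - destruct IH1 as [n1 [A1 [B1 C1]]]. destruct IH2 as [n2 [A2 [B2 C2]]].
    pose proof (nf_unique B1 C1 A2 C2); subst. eauto.
Qed.

End Proof.

Theorem lemma2p7 (X : Type) (HX : inhabited X) (u v : list (tletter X)) :
  u <> [] -> v <> [] -> (@Theta X u v <-> @cong X u v).
Proof.
  intros Hu Hv; split.
  - intros [_ [_ [w [[R1 _] [R2 _]]]]].
    destruct (@reducesA X u w R1) as [u1 [E1 S1]].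
    destruct (@reducesA X v w R2) as [v1 [E2 S2]].
    subst w. apply emb_inj in E2; subst v1.
    eapply c_trans; [apply tsteps_cong; eauto | apply c_sym, tsteps_cong; eauto].
  - intro H. destruct (cong_nf H) as [n [A [B C]]].
    split; [auto | split; [auto |]].
    exists (emb n); split; split; auto using reducesB, reducedB.
Qed.
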